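(* In the standing setting, if the step size satisfies $\eta\le\frac{1}{\kappa^2C_W}$, then for every $t\ge 0$ (with $f_1=0$), $\|f_{t+1}\|_K^2\le M^2C_W\,\eta\, t$ almost surely.
   Context: Standing setting: $\rho$ probability on $\mathcal X\times\mathcal Y$, $\mathcal Y\subseteq\mathbb R$, $|y|\le M$ a.s.; $K$ measurable symmetric positive semi-definite kernel with $\kappa=\sup_x\sqrt{K(x,x)}<\infty$, RKHS $\mathcal H_K$ with norm $\|\cdot\|_K$, $K_x=K(x,\cdot)$. $W:[0,\infty)\to\mathbb R$ with $W'_+(0)>0$, $W'(s)>0$ for $s>0$, $C_W:=\sup_{s>0}|W'(s)|<\infty$. Online algorithm: $z_t=(x_t,y_t)$ i.i.d. from $\rho$, $\sigma>0$, constant step size $\eta>0$, $f_1=0$, $f_{t+1}=f_t-\eta W'(\xi_{t,\sigma})(f_t(x_t)-y_t)K_{x_t}$, $\xi_{t,\sigma}=(y_t-f_t(x_t))^2/\sigma^2$. *)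

(* Defs.v *)
From HB Require Import structures.
From mathcomp Require Import all_boot all_order all_algebra.
From mathcomp Require Import all_classical all_reals all_analysis.
Set Implicit Arguments. Unset Strict Implicit. Unset Printing Implicit Defensive.
Import Order.TTheory GRing.Theory Num.Theory.
Import numFieldNormedType.Exports.
Local Open Scope classical_set_scope.
Local Open Scope ring_scope.

Section Defs.
Context {R : realType} {X : Type}.

(* A finite kernel expansion  sum_i a_i K_{u_i}, an element of
   span{K_x} inside H_K, stored as the list of pairs (a_i, u_i). *)
Definition kexp := seq (R * X).

Definition keval (K : X -> X -> R) (f : kexp) (x : X) : R :=
  \sum_(p <- f) p.1 * K p.2 x.

(* The squared RKHS norm of sum_i a_i K_{u_i}:
   ||f||_K^2 = <f,f>_K = sum_i sum_j a_i a_j K(u_i,u_j)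
   (reproducing property / definition of the inner product on span{K_x}). *)
Definition knorm2 (K : X -> X -> R) (f : kexp) : R :=
  \sum_(p <- f) \sum_(q <- f) p.1 * q.1 * K p.2 q.2.

Definition kernel_spsd (K : X -> X -> R) : Prop :=
  (forall x y, K x y = K y x) /\ (forall f : kexp, 0 <= knorm2 K f).

Definition kkappa (K : X -> X -> R) : R := sup (range (fun x => Num.sqrt (K x x))).

(* The online iterates on a fixed sample path z_1, z_2, ... given as
   z 0, z 1, ... (z n stands for z_{n+1}).  online n is f_{n+1}:
   f_1 = 0,
   f_{t+1} = f_t - eta W'(xi_{t,sigma}) (f_t(x_t) - y_t) K_{x_t}. *)
Fixpoint online (K : X -> X -> R) (Wp : R -> R) (sigma eta : R)
    (z : nat -> X * R) (n : nat) : kexp :=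
  match n with
  | 0 => [::]
  | m.+1 =>
    let f := online K Wp sigma eta z m in
    let x := (z m).1 in let y := (z m).2 in
    let r := keval K f x - y in
    let xi := (y - keval K f x) ^+ 2 / sigma ^+ 2 in
    f ++ [:: (- (eta * Wp xi * r), x)]
  end.

Definition CWconst (Wp : R -> R) : R := sup [set `|Wp s| | s in `]0, +oo[%classic].

End Defs.

Definition mutually_independent {R : realType} {d} {Omega : measurableType d}
  (P : probability Omega R) {dT} {T : measurableType dT} (Z : nat -> Omega -> T) : Prop :=
  forall (I : seq nat) (A : nat -> set T), uniq I ->
    (forall i, i \in I -> measurable (A i)) ->
    P (\big[setI/setT]_(i <- I) (Z i @^-1` A i)) =
    (\prod_(i <- I) P (Z i @^-1` A i))%E.

(* Main.v *)
Require Import Defs.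
From HB Require Import structures.
From mathcomp Require Import all_boot all_order all_algebra.
From mathcomp Require Import all_classical all_reals all_analysis.
From mathcomp Require Import ring lra.
Import Order.TTheory GRing.Theory Num.Theory.
Import numFieldNormedType.Exports.
Local Open Scope classical_set_scope.
Local Open Scope ring_scope.
Lemma knorm2_rcons (R : realType) (X : Type) (K : X -> X -> R) (f : kexp) c x :
  (forall a b, K a b = K b a) ->
  knorm2 K (f ++ [:: (c, x)]) = knorm2 K f + 2 * c * keval K f x + c ^+ 2 * K x x.
Proof.
move=> Ks; rewrite /knorm2 /keval big_cat big_seq1 /=.
under eq_bigr do rewrite big_cat big_seq1 /=.
rewrite big_split /= big_cat big_seq1 /=.
have -> : \sum_(i <- f) c * i.1 * K x i.2 = c * \sum_(i <- f) (i.1 * K i.2 x).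
  by rewrite mulr_sumr; apply: eq_bigr => i _; rewrite Ks mulrA.
have -> : \sum_(i <- f) i.1 * c * K i.2 x = c * \sum_(i <- f) (i.1 * K i.2 x).
  by rewrite mulr_sumr; apply: eq_bigr => i _; rewrite mulrCA mulrA.
rewrite /= expr2; lra.
Qed.
Lemma step_ineq (R : realType) (eta a Kxx kap CW F y M : R) :
  0 < eta -> 0 <= a -> a <= CW -> 0 <= Kxx -> Kxx <= kap ->
  eta * kap * CW <= 1 -> `|y| <= M ->
  2 * (- (eta * a * (F - y))) * F + (- (eta * a * (F - y))) ^+ 2 * Kxx
    <= M ^+ 2 * CW * eta.
Proof.
move=> he ha haC hK hKk hs hy.
have hea : 0 <= eta * a by apply: mulr_ge0 => //; exact: ltW.
have h1 : eta * a * Kxx <= 1.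
  apply: le_trans hs; rewrite -mulrA -[X in _ <= X]mulrA.
  apply: ler_wpM2l; first exact: ltW.
  rewrite [kap * CW]mulrC; apply: ler_pM => //.
have hr2 : 0 <= eta * a * (F - y) ^+ 2 by apply: mulr_ge0 => //; exact: sqr_ge0.
have h2 : (- (eta * a * (F - y))) ^+ 2 * Kxx <= eta * a * (F - y) ^+ 2.
  rewrite sqrrN exprMn [X in X <= _](_ : _ = (eta * a * (F - y) ^+ 2) * (eta * a * Kxx)).
    by rewrite -[X in _ <= X]mulr1; apply: ler_wpM2l.
  by rewrite expr2 expr2; ring.
have hy2 : y ^+ 2 <= M ^+ 2.
  move: hy; rewrite ler_norml => /andP[h4 h5].
  have : 0 <= (M - y) * (M + y) by apply: mulr_ge0; lra.
  rewrite !expr2; lra.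
have h3 : eta * a * y ^+ 2 <= eta * CW * M ^+ 2.
  apply: ler_pM => //; [exact: sqr_ge0| apply: ler_wpM2l => //; exact: ltW].
have hF : 0 <= eta * a * F ^+ 2 by apply: mulr_ge0 => //; exact: sqr_ge0.
have e : 2 * (- (eta * a * (F - y))) * F + eta * a * (F - y) ^+ 2 = eta * a * y ^+ 2 - eta * a * F ^+ 2.
  by rewrite !expr2; ring.
lra.
Qed.

Lemma det_bound (R : realType) (X : Type) (K : X -> X -> R) (Wp : R -> R)
  (sigma eta M : R) (zs : nat -> X * R) (t : nat) :
  kernel_spsd K -> has_ubound (range (fun x => Num.sqrt (K x x))) ->
  has_ubound [set `|Wp s| | s in `]0, +oo[%classic] ->
  (forall s : R, 0 < s -> 0 < Wp s) ->
  0 < sigma -> 0 < eta -> eta * kkappa K ^+ 2 * CWconst Wp <= 1 ->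
  (forall n, (n < t)%N -> `|(zs n).2| <= M) ->
  knorm2 K (online K Wp sigma eta zs t) <= M ^+ 2 * CWconst Wp * eta * t%:R.
Proof.
move=> [Ks Kpsd] Hk HC HWpos hs he hstep.
have Kxx0 : forall x, 0 <= K x x.
  move=> x; have := Kpsd [:: (1, x)].
  by rewrite /knorm2 !big_seq1 /= !mul1r.
have Kle : forall x, K x x <= kkappa K ^+ 2.
  move=> x; have hs1 : Num.sqrt (K x x) <= kkappa K.
    by apply: (ub_le_sup Hk); exists x.
  rewrite -(sqr_sqrtr (Kxx0 x)) !expr2.
  by apply: ler_pM => //; apply: sqrtr_ge0.
have WpC : forall s, 0 < s -> Wp s <= CWconst Wp.
  move=> s s0; apply: le_trans (ler_norm _) _.
  apply: (ub_le_sup HC); exists s => //=.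
  by rewrite in_itv /= andbT.
have CW0 : 0 <= CWconst Wp.
  apply: le_trans (normr_ge0 (Wp 1)) _.
  apply: (ub_le_sup HC); exists 1 => //=.
  by rewrite in_itv /= andbT.
elim: t => [|t IH] hy.
  by rewrite /knorm2 big_nil mulr0.
have IH' := IH (fun n hn => hy n (ltnW (leq_trans hn (leqnn t.+1)))).
rewrite /= knorm2_rcons //.
set f := online K Wp sigma eta zs t in IH' *.
set F := keval K f (zs t).1.
set y := (zs t).2.
have hyt : `|y| <= M by apply: hy.
rewrite -[t.+1%:R]natr1 [X in _ <= X]mulrDr [X in _ <= _ + X]mulr1.
suff : 2 * - (eta * Wp ((y - F) ^+ 2 / sigma ^+ 2) * (F - y)) * F +
  (- (eta * Wp ((y - F) ^+ 2 / sigma ^+ 2) * (F - y))) ^+ 2 * K (zs t).1 (zs t).1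
  <= M ^+ 2 * CWconst Wp * eta by lra.
have [r0|r0] := eqVneq (F - y) 0.
  rewrite r0 !mulr0 oppr0 mulr0 mul0r expr2 mulr0 mul0r addr0.
  apply: mulr_ge0; [apply: mulr_ge0 => //; exact: sqr_ge0|exact: ltW].
have xi0 : 0 < (y - F) ^+ 2 / sigma ^+ 2.
  apply: divr_gt0; last exact: exprn_gt0.
  by rewrite -sqrrN opprB lt_neqAle sqr_ge0 andbT eq_sym sqrf_eq0.
apply: step_ineq => //.
all: first [exact/ltW/HWpos | exact: WpC | exact: Kxx0 | exact: Kle].
Qed.
Lemma ae_n (R : realType) (dX : measure_display) (X : measurableType dX)
  (rho : probability (X * R)%type R) (M : R)
  (HM : {ae rho, forall zz : X * R, `|zz.2| <= M})
  (dO : measure_display) (Omega : measurableType dO) (P : probability Omega R)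
  (z : nat -> Omega -> X * R)
  (Hzmeas : forall n, measurable_fun setT (z n))
  (Hzdist : forall n (A : set (X * R)), measurable A -> P (z n @^-1` A) = rho A) n :
  {ae P, forall w : Omega, `|(z n w).2| <= M}.
Proof.
have [N [mN rN0 sub]] := HM.
exists (z n @^-1` N); split.
- rewrite -[_ @^-1` _]setTI; exact: Hzmeas.
- by rewrite Hzdist.
- by move=> w /= hw; apply: sub.
Qed.

Lemma ae_all (R : realType) (dO : measure_display) (Omega : measurableType dO) (P : probability Omega R)
  (Q : nat -> Omega -> Prop) :
  (forall n, {ae P, forall w, Q n w}) ->
  forall t, {ae P, forall w, forall n, (n < t)%N -> Q n w}.
Proof.
move=> H; elim=> [|t IH].
  by apply: nearW => w n.
apply: filterS2 IH (H t) => w h1 h2 n; rewrite ltnS leq_eqVlt => /orP[/eqP->//|].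
exact: h1.
Qed.
Theorem proposition2
  (R : realType)
  (* input space X (measurable), output space Y = R *)
  (dX : measure_display) (X : measurableType dX)
  (* rho : probability on X x Y with |y| <= M rho-a.s. *)
  (rho : probability (X * R)%type R) (M : R)
  (HM : {ae rho, forall zz : X * R, `|zz.2| <= M})
  (* measurable, symmetric, positive semi-definite kernel with kappa < oo *)
  (K : X -> X -> R)
  (HKmeas : measurable_fun setT (fun p : X * X => K p.1 p.2))
  (HK : kernel_spsd K)
  (Hkappa : has_ubound (range (fun x => Num.sqrt (K x x))))
  (* W : [0,oo) -> R with derivative Wp (right derivative at 0) *)
  (W Wp : R -> R)
  (HWd : forall s : R, 0 < s -> is_derive s (1 : R) W (Wp s))
  (HW0 : (fun h : R => h^-1 * (W h - W 0)) @ (0:R)^'+ --> Wp 0)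
  (HWp0 : 0 < Wp 0)
  (HWpos : forall s : R, 0 < s -> 0 < Wp s)
  (HCW : has_ubound [set `|Wp s| | s in `]0, +oo[%classic])
  (* the i.i.d. sample z_1, z_2, ... (z n stands for z_{n+1}) *)
  (dO : measure_display) (Omega : measurableType dO) (P : probability Omega R)
  (z : nat -> Omega -> X * R)
  (Hzmeas : forall n, measurable_fun setT (z n))
  (Hzdist : forall n (A : set (X * R)), measurable A -> P (z n @^-1` A) = rho A)
  (Hzindep : mutually_independent P z)
  (* parameters *)
  (sigma eta : R) (Hsigma : 0 < sigma) (Heta : 0 < eta)
  (Hstep : eta * kkappa K ^+ 2 * CWconst Wp <= 1) :
  forall t : nat,
    {ae P, forall w : Omega,
      knorm2 K (online K Wp sigma eta (fun n => z n w) t)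
        <= M ^+ 2 * CWconst Wp * eta * t%:R}.
Proof.
move=> t.
have H := @ae_all R dO Omega P _ (fun n => @ae_n R dX X rho M HM dO Omega P z Hzmeas Hzdist n) t.
apply: filterS H => w hw.
exact: (@det_bound R X K Wp sigma eta M (fun n => z n w) t HK Hkappa HCW HWpos Hsigma Heta Hstep hw).
Qed.
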